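(* Let $H$ be a bialgebra, $\mathcal{A}$ an $H$-bimodule algebra, $\mathbb{A}$ an $H$-bicomodule algebra and $A$ an algebra in the Yetter–Drinfeld category ${}^H_H\mathcal{YD}$. Then: the generalized smash product $\mathcal{A}\blacktriangleright\!\!<A$ is an $H$-bimodule algebra with actions $h\cdot(\varphi\blacktriangleright\!\!<a)=h_1\cdot\varphi\blacktriangleright\!\!<h_2\cdot a$ and $(\varphi\blacktriangleright\!\!<a)\cdot h=\varphi\cdot h\blacktriangleright\!\!<a$; the generalized smash product $A\blacktriangleright\!\!<\mathbb{A}$ is an $H$-bicomodule algebra with coactions $\rho(a\blacktriangleright\!\!<u)=(a\blacktriangleright\!\!<u_{<0>})\otimes u_{<1>}$ and $\lambda(a\blacktriangleright\!\!<u)=a_{(-1)}u_{[-1]}\otimes(a_{(0)}\blacktriangleright\!\!<u_{[0]})$; and the identity map of $\mathcal{A}\otimes A\otimes\mathbb{A}$ is an algebra isomorphism $(\mathcal{A}\blacktriangleright\!\!<A)\natural\mathbb{A}\cong\mathcal{A}\natural(A\blacktriangleright\!\!<\mathbb{A})$.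
   Context: Work over a field $k$; $H$ an ordinary bialgebra, $\Delta(h)=h_1\otimes h_2$. An $H$-bimodule algebra is an associative unital algebra $\mathcal{A}$ which is an $H$-bimodule with $h\cdot(\varphi\psi)=(h_1\cdot\varphi)(h_2\cdot\psi)$, $(\varphi\psi)\cdot h=(\varphi\cdot h_1)(\psi\cdot h_2)$, $h\cdot1=1\cdot h=\varepsilon(h)1$. An $H$-bicomodule algebra is an associative unital algebra $\mathbb{A}$ with algebra maps $\lambda(u)=u_{[-1]}\otimes u_{[0]}$ (left $H$-coaction) and $\rho(u)=u_{<0>}\otimes u_{<1>}$ (right $H$-coaction) making $\mathbb{A}$ an $H$-bicomodule. An algebra $A$ in ${}^H_H\mathcal{YD}$ is a left $H$-module algebra (action $h\cdot a$) and left $H$-comodule algebra (coaction $a\mapsto a_{(-1)}\otimes a_{(0)}$) such that $h_1a_{(-1)}\otimes h_2\cdot a_{(0)}=(h_1\cdot a)_{(-1)}h_2\otimes(h_1\cdot a)_{(0)}$. For a left $H$-module algebra $M$ and a left $H$-comodule algebra $N$ (coaction $n\mapsto n_{\{-1\}}\otimes n_{\{0\}}$), the generalized smash product $M\blacktriangleright\!\!<N$ is $M\otimes N$ with product $(m\blacktriangleright\!\!<n)(m'\blacktriangleright\!\!<n')=m(n_{\{-1\}}\cdot m')\blacktriangleright\!\!<n_{\{0\}}n'$ (here $\mathcal{A}$ is viewed as a left $H$-module algebra via its left action). For an $H$-bimodule algebra $\mathcal{B}$ and $H$-bicomodule algebra $\mathbb{B}$, the L-R-smash product $\mathcal{B}\natural\mathbb{B}$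 is $\mathcal{B}\otimes\mathbb{B}$ with product $(\varphi\natural u)(\psi\natural u')=(\varphi\cdot u'_{<1>})(u_{[-1]}\cdot\psi)\natural u_{[0]}u'_{<0>}$. *)

(* Defs.v *)
From HB Require Import structures.
From mathcomp Require Import all_boot all_algebra.

Set Implicit Arguments.
Unset Strict Implicit.
Unset Printing Implicit Defensive.

Import GRing.Theory.
Local Open Scope ring_scope.

(* Conventions:
   - k is a field; all vector spaces are [lmodType k].
   - An element of a tensor product V1 (x) ... (x) Vn is represented by a
     finite list of elementary tensors (tuples); two lists represent the same
     tensor iff every n-multilinear map into every k-vector space sends them
     to the same sum (universal property of the tensor product).
   - Sweedler sums h_1 (x) h_2 etc. are such lists. *)

Section Tensors.
Variable k : fieldType.

Definition lin1 (V X : lmodType k) (f : V -> X) : Prop :=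
  forall (a : k) (u v : V), f (a *: u + v) = a *: f u + f v.

Definition multilin2 (V1 V2 X : lmodType k) (f : V1 -> V2 -> X) : Prop :=
  (forall x2, lin1 (fun x1 => f x1 x2)) /\ (forall x1, lin1 (fun x2 => f x1 x2)).

Definition multilin3 (V1 V2 V3 X : lmodType k) (f : V1 -> V2 -> V3 -> X) : Prop :=
  [/\ forall x2 x3, lin1 (fun x1 => f x1 x2 x3),
      forall x1 x3, lin1 (fun x2 => f x1 x2 x3) &
      forall x1 x2, lin1 (fun x3 => f x1 x2 x3)].

Definition multilin4 (V1 V2 V3 V4 X : lmodType k)
    (f : V1 -> V2 -> V3 -> V4 -> X) : Prop :=
  [/\ forall x2 x3 x4, lin1 (fun x1 => f x1 x2 x3 x4),
      forall x1 x3 x4, lin1 (fun x2 => f x1 x2 x3 x4),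
      forall x1 x2 x4, lin1 (fun x3 => f x1 x2 x3 x4) &
      forall x1 x2 x3, lin1 (fun x4 => f x1 x2 x3 x4)].

Definition teq2 (V1 V2 : lmodType k) (s t : seq (V1 * V2)) : Prop :=
  forall (X : lmodType k) (f : V1 -> V2 -> X), multilin2 f ->
    \sum_(p <- s) f p.1 p.2 = \sum_(p <- t) f p.1 p.2.

Definition teq3 (V1 V2 V3 : lmodType k) (s t : seq (V1 * V2 * V3)) : Prop :=
  forall (X : lmodType k) (f : V1 -> V2 -> V3 -> X), multilin3 f ->
    \sum_(p <- s) f p.1.1 p.1.2 p.2 = \sum_(p <- t) f p.1.1 p.1.2 p.2.

Definition teq4 (V1 V2 V3 V4 : lmodType k) (s t : seq (V1 * V2 * V3 * V4)) : Prop :=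
  forall (X : lmodType k) (f : V1 -> V2 -> V3 -> V4 -> X), multilin4 f ->
    \sum_(p <- s) f p.1.1.1 p.1.1.2 p.1.2 p.2
    = \sum_(p <- t) f p.1.1.1 p.1.1.2 p.1.2 p.2.

Definition tscale2 (V1 V2 : lmodType k) (a : k) (s : seq (V1 * V2)) :=
  [seq (a *: p.1, p.2) | p <- s].
Definition tscale3 (V1 V2 V3 : lmodType k) (a : k) (s : seq (V1 * V2 * V3)) :=
  [seq (a *: p.1.1, p.1.2, p.2) | p <- s].

(* For an honest vector space one takes eqv := eq; for a tensor product
   represented by lists one takes eqv := teq2, add := cat, zero := [::]. *)
Section SetoidStructures.
Variables (T : Type) (eqv : T -> T -> Prop) (add : T -> T -> T) (zero : T)
          (scale : k -> T -> T) (mul : T -> T -> T) (one : T).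

Record is_algebra : Prop := {
  alg_mul_proper : forall x x' y y', eqv x x' -> eqv y y' ->
                     eqv (mul x y) (mul x' y');
  alg_mul_linl : forall a x x' y,
      eqv (mul (add (scale a x) x') y) (add (scale a (mul x y)) (mul x' y));
  alg_mul_linr : forall a x y y',
      eqv (mul x (add (scale a y) y')) (add (scale a (mul x y)) (mul x y'));
  alg_mulA : forall x y z, eqv (mul (mul x y) z) (mul x (mul y z));
  alg_mul1l : forall x, eqv (mul one x) x;
  alg_mul1r : forall x, eqv (mul x one) x }.

Variables (H : algType k) (Delta : H -> seq (H * H)) (eps : H -> k).

Definition sumD (h : H) (F : H -> H -> T) : T :=
  foldr (fun p acc => add (F p.1 p.2) acc) zero (Delta h).

Record is_left_module_algebra (act : H -> T -> T) : Prop := {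
  lma_alg : is_algebra;
  lma_proper : forall h x y, eqv x y -> eqv (act h x) (act h y);
  lma_linH : forall a g h x,
      eqv (act (a *: g + h) x) (add (scale a (act g x)) (act h x));
  lma_linT : forall h a x y,
      eqv (act h (add (scale a x) y)) (add (scale a (act h x)) (act h y));
  lma_act1 : forall x, eqv (act 1 x) x;
  lma_actM : forall g h x, eqv (act (g * h) x) (act g (act h x));
  lma_act_mul : forall h x y,
      eqv (act h (mul x y)) (sumD h (fun h1 h2 => mul (act h1 x) (act h2 y)));
  lma_act_one : forall h, eqv (act h one) (scale (eps h) one) }.

Record is_right_module_algebra (act : T -> H -> T) : Prop := {
  rma_alg : is_algebra;
  rma_proper : forall h x y, eqv x y -> eqv (act x h) (act y h);
  rma_linH : forall a g h x,
      eqv (act x (a *: g + h)) (add (scale a (act x g)) (act x h));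
  rma_linT : forall h a x y,
      eqv (act (add (scale a x) y) h) (add (scale a (act x h)) (act y h));
  rma_act1 : forall x, eqv (act x 1) x;
  rma_actM : forall g h x, eqv (act x (g * h)) (act (act x g) h);
  rma_act_mul : forall h x y,
      eqv (act (mul x y) h) (sumD h (fun h1 h2 => mul (act x h1) (act y h2)));
  rma_act_one : forall h, eqv (act one h) (scale (eps h) one) }.

Record is_bimodule_algebra (lact : H -> T -> T) (ract : T -> H -> T) : Prop := {
  bma_left : is_left_module_algebra lact;
  bma_right : is_right_module_algebra ract;
  bma_comm : forall h g x, eqv (lact h (ract x g)) (ract (lact h x) g) }.

End SetoidStructures.

Section Hopf.
Variables (H : algType k) (Delta : H -> seq (H * H)) (eps : H -> k).

Record is_bialgebra : Prop := {
  bi_Delta_lin : forall a x y,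
      teq2 (Delta (a *: x + y)) (tscale2 a (Delta x) ++ Delta y);
  bi_eps_lin : forall a x y, eps (a *: x + y) = a * eps x + eps y;
  bi_coassoc : forall h,
      teq3 [seq (q.1, q.2, p.2) | p <- Delta h, q <- Delta p.1]
           [seq (p.1, q.1, q.2) | p <- Delta h, q <- Delta p.2];
  bi_counitl : forall h, \sum_(p <- Delta h) eps p.1 *: p.2 = h;
  bi_counitr : forall h, \sum_(p <- Delta h) eps p.2 *: p.1 = h;
  bi_DeltaM : forall x y,
      teq2 (Delta (x * y)) [seq (p.1 * q.1, p.2 * q.2) | p <- Delta x, q <- Delta y];
  bi_Delta1 : teq2 (Delta 1) [:: (1, 1)];
  bi_epsM : forall x y, eps (x * y) = eps x * eps y;
  bi_eps1 : eps 1 = 1 }.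

Definition algebra_on (M : lmodType k) (mul : M -> M -> M) (one : M) :=
  is_algebra (@eq M) +%R ( *:%R) mul one.

Definition H_bimodule_algebra (M : lmodType k) (mul : M -> M -> M) (one : M)
    (lact : H -> M -> M) (ract : M -> H -> M) :=
  is_bimodule_algebra (@eq M) +%R 0 ( *:%R) mul one Delta eps lact ract.

Definition H_left_module_algebra (M : lmodType k) (mul : M -> M -> M) (one : M)
    (act : H -> M -> M) :=
  is_left_module_algebra (@eq M) +%R 0 ( *:%R) mul one Delta eps act.

Section Comodules.
Variables (M : lmodType k) (mul : M -> M -> M) (one : M).

Record is_left_comodule_algebra (lam : M -> seq (H * M)) : Prop := {
  lca_alg : algebra_on mul one;
  lca_lin : forall a x y, teq2 (lam (a *: x + y)) (tscale2 a (lam x) ++ lam y);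
  lca_coassoc : forall u,
      teq3 [seq (q.1, q.2, p.2) | p <- lam u, q <- Delta p.1]
           [seq (p.1, q.1, q.2) | p <- lam u, q <- lam p.2];
  lca_counit : forall u, \sum_(p <- lam u) eps p.1 *: p.2 = u;
  lca_mul : forall x y,
      teq2 (lam (mul x y)) [seq (p.1 * q.1, mul p.2 q.2) | p <- lam x, q <- lam y];
  lca_one : teq2 (lam one) [:: (1, one)] }.

Record is_right_comodule_algebra (rho : M -> seq (M * H)) : Prop := {
  rca_alg : algebra_on mul one;
  rca_lin : forall a x y, teq2 (rho (a *: x + y)) (tscale2 a (rho x) ++ rho y);
  rca_coassoc : forall u,
      teq3 [seq (q.1, q.2, p.2) | p <- rho u, q <- rho p.1]
           [seq (p.1, q.1, q.2) | p <- rho u, q <- Delta p.2];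
  rca_counit : forall u, \sum_(p <- rho u) eps p.2 *: p.1 = u;
  rca_mul : forall x y,
      teq2 (rho (mul x y)) [seq (mul p.1 q.1, p.2 * q.2) | p <- rho x, q <- rho y];
  rca_one : teq2 (rho one) [:: (one, 1)] }.

(* H-bicomodule algebra: lam(u) = u_[-1] (x) u_[0], rho(u) = u_<0> (x) u_<1> *)
Record is_bicomodule_algebra (lam : M -> seq (H * M)) (rho : M -> seq (M * H))
  : Prop := {
  bca_left : is_left_comodule_algebra lam;
  bca_right : is_right_comodule_algebra rho;
  bca_compat : forall u,
      teq3 [seq (q.1, q.2, p.2) | p <- rho u, q <- lam p.1]
           [seq (p.1, q.1, q.2) | p <- lam u, q <- rho p.2] }.

Record is_YD_algebra (act : H -> M -> M) (lam : M -> seq (H * M)) : Prop := {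
  yd_module : H_left_module_algebra mul one act;
  yd_comodule : is_left_comodule_algebra lam;
  yd_compat : forall h a,
      teq2 [seq (p.1 * q.1, act p.2 q.2) | p <- Delta h, q <- lam a]
           [seq (q.1 * p.2, q.2) | p <- Delta h, q <- lam (act p.1 a)] }.
End Comodules.

(* Generalized smash product M >< N, on representatives in M (x) N:
   (m >< n)(m' >< n') = m (n_{-1} . m') >< n_{0} n'                    *)
Definition smash_mul (M N : lmodType k) (mulM : M -> M -> M) (mulN : N -> N -> N)
    (act : H -> M -> M) (lam : N -> seq (H * N)) (s t : seq (M * N))
  : seq (M * N) :=
  [seq x | p <- s,
           x <- [seq (mulM p.1 (act r.1 q.1), mulN r.2 q.2) | q <- t, r <- lam p.2]].

Definition smash_one (M N : lmodType k) (oneM : M) (oneN : N) : seq (M * N) :=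
  [:: (oneM, oneN)].


Definition smash_lact (M N : lmodType k) (actM : H -> M -> M) (actN : H -> N -> N)
    (h : H) (s : seq (M * N)) : seq (M * N) :=
  [seq (actM p.1 q.1, actN p.2 q.2) | q <- s, p <- Delta h].

Definition smash_ract (M N : lmodType k) (ractM : M -> H -> M)
    (s : seq (M * N)) (h : H) : seq (M * N) :=
  [seq (ractM q.1 h, q.2) | q <- s].

Definition smash_rho (M N : lmodType k) (rhoN : N -> seq (N * H))
    (s : seq (M * N)) : seq (M * N * H) :=
  [seq (q.1, p.1, p.2) | q <- s, p <- rhoN q.2].

Definition smash_lam (M N : lmodType k) (lamM : M -> seq (H * M))
    (lamN : N -> seq (H * N)) (s : seq (M * N)) : seq (H * M * N) :=
  [seq x | q <- s,
           x <- [seq (p.1 * r.1, p.2, r.2) | p <- lamM q.1, r <- lamN q.2]].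

Record is_rep_bicomodule_algebra (M N : lmodType k)
    (mul : seq (M * N) -> seq (M * N) -> seq (M * N)) (one : seq (M * N))
    (lam : seq (M * N) -> seq (H * M * N)) (rho : seq (M * N) -> seq (M * N * H))
  : Prop := {
  rbca_alg : is_algebra (@teq2 M N) cat (@tscale2 M N) mul one;
  rbca_lam_proper : forall s t, teq2 s t -> teq3 (lam s) (lam t);
  rbca_rho_proper : forall s t, teq2 s t -> teq3 (rho s) (rho t);
  rbca_lam_lin : forall a s t,
      teq3 (lam (tscale2 a s ++ t)) ([seq (a *: p.1.1, p.1.2, p.2) | p <- lam s] ++ lam t);
  rbca_rho_lin : forall a s t,
      teq3 (rho (tscale2 a s ++ t)) (tscale3 a (rho s) ++ rho t);
  rbca_lam_coassoc : forall s,
      teq4 [seq (q.1, q.2, p.1.2, p.2) | p <- lam s, q <- Delta p.1.1]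
           [seq (p.1.1, q.1.1, q.1.2, q.2) | p <- lam s, q <- lam [:: (p.1.2, p.2)]];
  rbca_lam_counit : forall s, teq2 [seq (eps p.1.1 *: p.1.2, p.2) | p <- lam s] s;
  rbca_rho_coassoc : forall s,
      teq4 [seq (q.1.1, q.1.2, q.2, p.2) | p <- rho s, q <- rho [:: (p.1.1, p.1.2)]]
           [seq (p.1.1, p.1.2, q.1, q.2) | p <- rho s, q <- Delta p.2];
  rbca_rho_counit : forall s, teq2 [seq (eps p.2 *: p.1.1, p.1.2) | p <- rho s] s;
  rbca_lam_mul : forall s t,
      teq3 (lam (mul s t))
           [seq x | p <- lam s, x <- [seq (p.1.1 * q.1.1, y.1, y.2)
                                     | q <- lam t, y <- mul [:: (p.1.2, p.2)] [:: (q.1.2, q.2)]]];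
  rbca_lam_one : teq3 (lam one) [seq (1, y.1, y.2) | y <- one];
  rbca_rho_mul : forall s t,
      teq3 (rho (mul s t))
           [seq x | p <- rho s, x <- [seq (y.1, y.2, p.2 * q.2)
                                     | q <- rho t, y <- mul [:: (p.1.1, p.1.2)] [:: (q.1.1, q.1.2)]]];
  rbca_rho_one : teq3 (rho one) [seq (y.1, y.2, 1) | y <- one];
  rbca_compat : forall s,
      teq4 [seq (q.1.1, q.1.2, q.2, p.2) | p <- rho s, q <- lam [:: (p.1.1, p.1.2)]]
           [seq (p.1.1, q.1.1, q.1.2, q.2) | p <- lam s, q <- rho [:: (p.1.2, p.2)]] }.

(* L-R-smash products, on representatives of elements of V1 (x) V2 (x) W.
   (phi # u)(psi # u') = (phi . u'_<1>)(u_[-1] . psi) # u_[0] u'_<0>     *)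

(* (V1 >< V2) # W, where B = V1 >< V2 is given on representatives *)
Definition lr_mul_left (V1 V2 W : lmodType k)
    (mulB : seq (V1 * V2) -> seq (V1 * V2) -> seq (V1 * V2))
    (lactB : H -> seq (V1 * V2) -> seq (V1 * V2))
    (ractB : seq (V1 * V2) -> H -> seq (V1 * V2))
    (mulW : W -> W -> W) (lamW : W -> seq (H * W)) (rhoW : W -> seq (W * H))
    (s t : seq (V1 * V2 * W)) : seq (V1 * V2 * W) :=
  [seq z | x <- s, z <-
   [seq z | y <- t, z <-
    [seq z | p <- rhoW y.2, z <-
     [seq (b.1, b.2, mulW q.2 p.1)
     | q <- lamW x.2, b <- mulB (ractB [:: x.1] p.2) (lactB q.1 [:: y.1])]]]].

(* V1 # (V2 >< W), where the bicomodule algebra V2 >< W is given on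
   representatives *)
Definition lr_mul_right (V1 V2 W : lmodType k)
    (mulV : V1 -> V1 -> V1) (lactV : H -> V1 -> V1) (ractV : V1 -> H -> V1)
    (mulB : seq (V2 * W) -> seq (V2 * W) -> seq (V2 * W))
    (lamB : seq (V2 * W) -> seq (H * V2 * W))
    (rhoB : seq (V2 * W) -> seq (V2 * W * H))
    (s t : seq (V1 * V2 * W)) : seq (V1 * V2 * W) :=
  [seq z | x <- s, z <-
   [seq z | y <- t, z <-
    [seq z | p <- rhoB [:: (y.1.2, y.2)], z <-
     [seq (mulV (ractV x.1.1 p.2) (lactV q.1.1 y.1.1), b.1, b.2)
     | q <- lamB [:: (x.1.2, x.2)],
       b <- mulB [:: (q.1.2, q.2)] [:: (p.1.1, p.1.2)]]]]].

End Hopf.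
End Tensors.

(* Main.v *)
Require Import Defs.
From HB Require Import structures.
From mathcomp Require Import all_boot all_algebra.
Set Implicit Arguments. Unset Strict Implicit. Unset Printing Implicit Defensive.
Import GRing.Theory.
Local Open Scope ring_scope.

Section Gen.
Variable k : fieldType.

Lemma lin0 (V X : lmodType k) (f : V -> X) : lin1 f -> f 0 = 0.
Proof. move=> Hf; have E := Hf 1 0 0; rewrite !scale1r addr0 in E.
by apply: (addrI (f 0)); rewrite addr0 -E. Qed.

Lemma linZ (V X : lmodType k) (f : V -> X) a u : lin1 f -> f (a *: u) = a *: f u.
Proof. by move=> Hf; have := Hf a u 0; rewrite !addr0 (lin0 Hf) addr0. Qed.

Lemma linD (V X : lmodType k) (f : V -> X) u v : lin1 f -> f (u + v) = f u + f v.
Proof. by move=> Hf; have := Hf 1 u v; rewrite !scale1r. Qed.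

Lemma lin_sum (V X : lmodType k) (f : V -> X) (I : Type) (s : seq I) (F : I -> V) :
  lin1 f -> f (\sum_(i <- s) F i) = \sum_(i <- s) f (F i).
Proof.
move=> Hf; elim: s => [|x s IH]; first by rewrite !big_nil (lin0 Hf).
by rewrite !big_cons (linD _ _ Hf) IH.
Qed.

Lemma lin_id (V : lmodType k) : lin1 (fun x : V => x).
Proof. by []. Qed.

Lemma lin_sumc (V X : lmodType k) (I : Type) (s : seq I) (F : I -> V -> X) :
  (forall i, lin1 (fun x => F i x)) -> lin1 (fun x => \sum_(i <- s) F i x).
Proof.
move=> HF a u v; rewrite scaler_sumr -big_split /=.
by apply: eq_bigr => i _; rewrite HF.
Qed.

Lemma lin_addf (V X : lmodType k) (F G : V -> X) :
  lin1 F -> lin1 G -> lin1 (fun x => F x + G x).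
Proof.
move=> HF HG a u v /=; rewrite HF HG scalerDr -!addrA; congr (_ + _).
by rewrite addrCA.
Qed.

Lemma lin_scalef (V X : lmodType k) c (F : V -> X) :
  lin1 F -> lin1 (fun x => c *: F x).
Proof. by move=> HF a u v /=; rewrite HF scalerDr !scalerA mulrC. Qed.

Lemma lin_app0 (U V X : lmodType k) (g : U -> X) (E : V -> U) :
  lin1 g -> lin1 E -> lin1 (fun x => g (E x)).
Proof. by move=> Hg HE a u v /=; rewrite HE Hg. Qed.

Lemma lin_app1 (U V X : lmodType k) (C1 : Type) (g : U -> C1 -> X) c1 (E : V -> U) :
  lin1 (fun u => g u c1) -> lin1 E -> lin1 (fun x => g (E x) c1).
Proof. by move=> Hg HE a u v /=; rewrite HE Hg. Qed.

Lemma lin_app2 (U V X : lmodType k) (C1 C2 : Type) (g : U -> C1 -> C2 -> X) c1 c2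
   (E : V -> U) :
  lin1 (fun u => g u c1 c2) -> lin1 E -> lin1 (fun x => g (E x) c1 c2).
Proof. by move=> Hg HE a u v /=; rewrite HE Hg. Qed.

Lemma lin_app3 (U V X : lmodType k) (C1 C2 C3 : Type) (g : U -> C1 -> C2 -> C3 -> X)
   c1 c2 c3 (E : V -> U) :
  lin1 (fun u => g u c1 c2 c3) -> lin1 E -> lin1 (fun x => g (E x) c1 c2 c3).
Proof. by move=> Hg HE a u v /=; rewrite HE Hg. Qed.

Lemma lin_mull (R : algType k) (c : R) : lin1 (fun u : R => u * c).
Proof. by move=> a u v; rewrite mulrDl scalerAl. Qed.

Lemma lin_mulr (R : algType k) (c : R) : lin1 (fun u : R => c * u).
Proof. by move=> a u v; rewrite mulrDr scalerAr. Qed.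

Lemma lin_scaler (V : lmodType k) (c : k) : lin1 (fun u : V => c *: u).
Proof. by move=> a u v; rewrite scalerDr !scalerA mulrC. Qed.

Lemma teq2_sumF (V1 V2 X : lmodType k) (s t : seq (V1 * V2)) (F : V1 * V2 -> X) :
  teq2 s t -> multilin2 (fun a b => F (a, b)) ->
  \sum_(p <- s) F p = \sum_(p <- t) F p.
Proof.
move=> Hst HF; have := Hst X (fun a b => F (a, b)) HF.
have E : forall r : seq (V1 * V2), \sum_(p <- r) F (p.1, p.2) = \sum_(p <- r) F p.
  by move=> r; apply: eq_bigr => -[].
by rewrite !E.
Qed.

Lemma teq3_sumF (V1 V2 V3 X : lmodType k) (s t : seq (V1 * V2 * V3))
   (F : V1 * V2 * V3 -> X) :
  teq3 s t -> multilin3 (fun a b c => F (a, b, c)) ->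
  \sum_(p <- s) F p = \sum_(p <- t) F p.
Proof.
move=> Hst HF; have := Hst X (fun a b c => F (a, b, c)) HF.
have E : forall r : seq (V1 * V2 * V3),
  \sum_(p <- r) F (p.1.1, p.1.2, p.2) = \sum_(p <- r) F p.
  by move=> r; apply: eq_bigr => -[[]].
by rewrite !E.
Qed.

Lemma teq4_sumF (V1 V2 V3 V4 X : lmodType k) (s t : seq (V1 * V2 * V3 * V4))
   (F : V1 * V2 * V3 * V4 -> X) :
  teq4 s t -> multilin4 (fun a b c d => F (a, b, c, d)) ->
  \sum_(p <- s) F p = \sum_(p <- t) F p.
Proof.
move=> Hst HF; have := Hst X (fun a b c d => F (a, b, c, d)) HF.
have E : forall r : seq (V1 * V2 * V3 * V4),
  \sum_(p <- r) F (p.1.1.1, p.1.1.2, p.1.2, p.2) = \sum_(p <- r) F p.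
  by move=> r; apply: eq_bigr => -[[[]]].
by rewrite !E.
Qed.

Definition llin2 (U V1 V2 : lmodType k) (L : U -> seq (V1 * V2)) :=
  forall a u v, teq2 (L (a *: u + v)) (tscale2 a (L u) ++ L v).

Lemma lin_sumL (U V X V1 V2 : lmodType k) (L : U -> seq (V1 * V2))
   (F : V1 * V2 -> X) (E : V -> U) :
  llin2 L -> multilin2 (fun a b => F (a, b)) -> lin1 E ->
  lin1 (fun x => \sum_(p <- L (E x)) F p).
Proof.
move=> HL HF HE a u v /=; rewrite HE (teq2_sumF (HL _ _ _) HF) big_cat big_map.
congr (_ + _); rewrite scaler_sumr; apply: eq_bigr => -[x y] _ /=.
by case: HF => H1 _; rewrite (linZ _ _ (H1 y)).
Qed.

Lemma sum_tscale (V1 V2 X : lmodType k) a (s t : seq (V1 * V2)) (F : V1 * V2 -> X) :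
  (forall y, lin1 (fun x => F (x, y))) ->
  \sum_(p <- tscale2 a s ++ t) F p = a *: \sum_(p <- s) F p + \sum_(p <- t) F p.
Proof.
move=> HF; rewrite big_cat big_map scaler_sumr; congr (_ + _).
by apply: eq_bigr => -[x y] _ /=; rewrite (linZ _ _ (HF y)).
Qed.

Lemma sum_tscale3 (V1 V2 V3 X : lmodType k) a (s t : seq (V1 * V2 * V3))
  (F : V1 * V2 * V3 -> X) :
  (forall y z, lin1 (fun x => F (x, y, z))) ->
  \sum_(p <- tscale3 a s ++ t) F p = a *: \sum_(p <- s) F p + \sum_(p <- t) F p.
Proof.
move=> HF; rewrite big_cat big_map scaler_sumr; congr (_ + _).
by apply: eq_bigr => -[[x y] z] _ /=; rewrite (linZ _ _ (HF y z)).
Qed.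

Lemma xchg (X : lmodType k) (I J : Type) (s : seq I) (t : seq J) (F : I -> J -> X) :
  \sum_(i <- s) \sum_(j <- t) F i j = \sum_(j <- t) \sum_(i <- s) F i j.
Proof. exact: exchange_big. Qed.

Lemma sum_ap (X : lmodType k) (I J T : Type) (s : seq I) (t : I -> seq J)
  (h : I -> J -> T) (F : T -> X) :
  \sum_(z <- [seq h i j | i <- s, j <- t i]) F z = \sum_(i <- s) \sum_(j <- t i) F (h i j).
Proof. exact: big_allpairs_dep. Qed.

Lemma teq2_refl (V1 V2 : lmodType k) (s : seq (V1 * V2)) : teq2 s s.
Proof. by []. Qed.
Lemma teq2_sym (V1 V2 : lmodType k) (s t : seq (V1 * V2)) : teq2 s t -> teq2 t s.
Proof. by move=> H X f Hf; rewrite H. Qed.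
Lemma teq2_trans (V1 V2 : lmodType k) (s t u : seq (V1 * V2)) :
  teq2 s t -> teq2 t u -> teq2 s u.
Proof. by move=> H1 H2 X f Hf; rewrite H1 ?H2. Qed.

End Gen.

Ltac lin_atom := first [ assumption | apply: lin_mull | apply: lin_mulr
  | apply: lin_scaler
  | match goal with H : _ |- _ => apply: H end ].

Ltac lin_extra := fail.

Ltac solve_lin :=
  cbn beta iota delta [fst snd];
  first
  [ exact: lin_id
  | solve [ lin_atom ]
  | apply: lin_sumc => ?; solve_lin
  | apply: lin_sumL; [ lin_atom | solve_ml | solve_lin ]
  | apply: lin_addf; solve_lin
  | apply: lin_scalef; solve_lin
  | apply: lin_app0; [ lin_atom | solve_lin ]
  | apply: lin_app1; [ lin_atom | solve_lin ]
  | apply: lin_app2; [ lin_atom | solve_lin ]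
  | apply: lin_app3; [ lin_atom | solve_lin ]
  | lin_extra ]
with solve_ml :=
  cbn beta iota delta [fst snd]; split => *; solve_lin.

Ltac side := first [ solve [ move=> [? ?] [? ?]; reflexivity ]
  | solve [ move=> [? ?] [? ?] [? ?]; reflexivity ] | solve [ solve_ml ]
  | solve [ intros; solve_lin ] ].
Tactic Notation "srw" open_constr(t) := rewrite t; [ | side .. ].

Ltac cs := cbn beta iota delta [fst snd].
Ltac deep tac := first [ progress tac | under eq_bigr => ? _ do deep tac ].
Ltac deepL tac := first [ progress tac | under [LHS]eq_bigr => ? _ do deep tac ].
Ltac deepR tac := first [ progress tac | under [RHS]eq_bigr => ? _ do deep tac ].
Ltac at_depth n tac := lazymatch n with
  | O => tac | S ?m => under eq_bigr => ? _ do at_depth m tac end.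
Ltac atL n tac := lazymatch n with
  | O => tac | S ?m => under [LHS]eq_bigr => ? _ do at_depth m tac end.
Ltac atR n tac := lazymatch n with
  | O => tac | S ?m => under [RHS]eq_bigr => ? _ do at_depth m tac end.


Section Bi.
Variables (k : fieldType) (H : algType k) (Delta : H -> seq (H * H)) (eps : H -> k).
Hypothesis HB : is_bialgebra Delta eps.

Lemma D_llin : llin2 Delta.
Proof. exact: bi_Delta_lin HB. Qed.

Lemma lin_epsZ (V X : lmodType k) (c : X) (E : V -> H) :
  lin1 E -> lin1 (fun x => eps (E x) *: c).
Proof. by move=> HE a u v; rewrite HE (bi_eps_lin HB) scalerDl scalerA. Qed.

Lemma D_coA (X : lmodType k) h (G : H * H -> H * H -> X) :
  (forall p q, G p q = G (0, p.2) q) ->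
  multilin3 (fun a b c => G (0, c) (a, b)) ->
  \sum_(p <- Delta h) \sum_(q <- Delta p.1) G p q =
  \sum_(p <- Delta h) \sum_(q <- Delta p.2) G (0, q.2) (p.1, q.1).
Proof.
move=> HG HF.
have := teq3_sumF (F := fun x => G (0, x.2) (x.1.1, x.1.2)) (bi_coassoc HB h) HF.
rewrite !big_allpairs_dep /= => <-.
by apply: eq_bigr => p _; apply: eq_bigr => -[q1 q2] _; rewrite HG.
Qed.

Lemma D_coA' (X : lmodType k) h (G : H * H -> H * H -> X) :
  (forall p q, G p q = G (p.1, 0) q) ->
  multilin3 (fun a b c => G (a, 0) (b, c)) ->
  \sum_(p <- Delta h) \sum_(q <- Delta p.2) G p q =
  \sum_(p <- Delta h) \sum_(q <- Delta p.1) G (q.1, 0) (q.2, p.2).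
Proof.
move=> HG HF.
have := teq3_sumF (F := fun x => G (x.1.1, 0) (x.1.2, x.2)) (bi_coassoc HB h) HF.
rewrite !big_allpairs_dep /= => ->.
by apply: eq_bigr => p _; apply: eq_bigr => -[q1 q2] _; rewrite HG.
Qed.

Lemma D_M (X : lmodType k) x y (F : H * H -> X) :
  multilin2 (fun a b => F (a, b)) ->
  \sum_(p <- Delta (x * y)) F p =
  \sum_(p <- Delta x) \sum_(q <- Delta y) F (p.1 * q.1, p.2 * q.2).
Proof.
by move=> HF; rewrite (teq2_sumF (bi_DeltaM HB x y) HF) big_allpairs_dep.
Qed.

Lemma D_1 (X : lmodType k) (F : H * H -> X) :
  multilin2 (fun a b => F (a, b)) -> \sum_(p <- Delta 1) F p = F (1, 1).
Proof. by move=> HF; rewrite (teq2_sumF (bi_Delta1 HB) HF) big_seq1. Qed.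

Lemma D_counitl (X : lmodType k) h (G : H -> X) :
  lin1 G -> \sum_(p <- Delta h) eps p.1 *: G p.2 = G h.
Proof.
move=> HG; rewrite -[in RHS](bi_counitl HB h) (lin_sum _ _ HG).
by apply: eq_bigr => p _; rewrite (linZ _ _ HG).
Qed.

Lemma D_counitr (X : lmodType k) h (G : H -> X) :
  lin1 G -> \sum_(p <- Delta h) eps p.2 *: G p.1 = G h.
Proof.
move=> HG; rewrite -[in RHS](bi_counitr HB h) (lin_sum _ _ HG).
by apply: eq_bigr => p _; rewrite (linZ _ _ HG).
Qed.

Lemma epsM x y : eps (x * y) = eps x * eps y. Proof. by case: HB. Qed.
Lemma eps1 : eps 1 = 1. Proof. by case: HB. Qed.

Lemma D_4 (X : lmodType k) h (G : H * H -> H * H -> H * H -> X) :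
  (forall d e g, G d e g = G (0, 0) (e.1, e.2) (g.1, g.2)) ->
  multilin4 (fun a b c d => G (0, 0) (a, b) (c, d)) ->
  \sum_(d <- Delta h) \sum_(e <- Delta d.1) \sum_(g <- Delta d.2) G d e g =
  \sum_(d <- Delta h) \sum_(q <- Delta d.1) \sum_(m <- Delta q.2)
     G (0, 0) (q.1, m.1) (m.2, d.2).
Proof.
move=> HG [H1 H2 H3 H4]; have LD := D_llin.
under eq_bigr => d _ do rewrite xchg.
transitivity (\sum_(d <- Delta h) \sum_(g <- Delta d.2) \sum_(e <- Delta d.1)
   G (0, 0) (e.1, e.2) (g.1, g.2)).
  by apply: eq_bigr => d _; apply: eq_bigr => g _; apply: eq_bigr => e _; rewrite HG.
rewrite D_coA'; [cs | move=> [? ?] [? ?]; reflexivity | by solve_ml].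
by under eq_bigr => d _ do srw D_coA.
Qed.

Section LCo.
Variables (M : lmodType k) (mul : M -> M -> M) (one : M) (lam : M -> seq (H * M)).
Hypothesis HL : is_left_comodule_algebra Delta eps mul one lam.

Lemma L_llin : llin2 lam. Proof. exact: lca_lin HL. Qed.

Lemma L_coA (X : lmodType k) u (G : H * M -> H * H -> X) :
  (forall p q, G p q = G (0, p.2) q) ->
  multilin3 (fun a b c => G (0, c) (a, b)) ->
  \sum_(p <- lam u) \sum_(q <- Delta p.1) G p q =
  \sum_(p <- lam u) \sum_(q <- lam p.2) G (0, q.2) (p.1, q.1).
Proof.
move=> HG HF.
have := teq3_sumF (F := fun x => G (0, x.2) (x.1.1, x.1.2)) (lca_coassoc HL u) HF.
rewrite !big_allpairs_dep /= => <-.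
by apply: eq_bigr => p _; apply: eq_bigr => -[q1 q2] _; rewrite HG.
Qed.

Lemma L_coA' (X : lmodType k) u (G : H * M -> H * M -> X) :
  (forall p q, G p q = G (p.1, 0) q) ->
  multilin3 (fun a b c => G (a, 0) (b, c)) ->
  \sum_(p <- lam u) \sum_(q <- lam p.2) G p q =
  \sum_(p <- lam u) \sum_(q <- Delta p.1) G (q.1, 0) (q.2, p.2).
Proof.
move=> HG HF.
have := teq3_sumF (F := fun x => G (x.1.1, 0) (x.1.2, x.2)) (lca_coassoc HL u) HF.
rewrite !big_allpairs_dep /= => ->.
by apply: eq_bigr => p _; apply: eq_bigr => -[q1 q2] _; rewrite HG.
Qed.

Lemma L_M (X : lmodType k) x y (F : H * M -> X) :
  multilin2 (fun a b => F (a, b)) ->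
  \sum_(p <- lam (mul x y)) F p =
  \sum_(p <- lam x) \sum_(q <- lam y) F (p.1 * q.1, mul p.2 q.2).
Proof.
by move=> HF; rewrite (teq2_sumF (lca_mul HL x y) HF) big_allpairs_dep.
Qed.

Lemma L_1 (X : lmodType k) (F : H * M -> X) :
  multilin2 (fun a b => F (a, b)) -> \sum_(p <- lam one) F p = F (1, one).
Proof. by move=> HF; rewrite (teq2_sumF (lca_one HL) HF) big_seq1. Qed.

Lemma L_counit (X : lmodType k) u (G : M -> X) :
  lin1 G -> \sum_(p <- lam u) eps p.1 *: G p.2 = G u.
Proof.
move=> HG; rewrite -[in RHS](lca_counit HL u) (lin_sum _ _ HG).
by apply: eq_bigr => p _; rewrite (linZ _ _ HG).
Qed.

Lemma L_alg : algebra_on mul one. Proof. exact: lca_alg HL. Qed.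
End LCo.

Section RCo.
Variables (M : lmodType k) (mul : M -> M -> M) (one : M) (rho : M -> seq (M * H)).
Hypothesis HR : is_right_comodule_algebra Delta eps mul one rho.

Lemma R_llin : llin2 rho. Proof. exact: rca_lin HR. Qed.

Lemma R_coA (X : lmodType k) u (G : M * H -> H * H -> X) :
  (forall p q, G p q = G (p.1, 0) q) ->
  multilin3 (fun a b c => G (a, 0) (b, c)) ->
  \sum_(p <- rho u) \sum_(q <- Delta p.2) G p q =
  \sum_(p <- rho u) \sum_(q <- rho p.1) G (q.1, 0) (q.2, p.2).
Proof.
move=> HG HF.
have := teq3_sumF (F := fun x => G (x.1.1, 0) (x.1.2, x.2)) (rca_coassoc HR u) HF.
rewrite !big_allpairs_dep /= => ->.
by apply: eq_bigr => p _; apply: eq_bigr => -[q1 q2] _; rewrite HG.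
Qed.

Lemma R_coA' (X : lmodType k) u (G : M * H -> M * H -> X) :
  (forall p q, G p q = G (0, p.2) q) ->
  multilin3 (fun a b c => G (0, c) (a, b)) ->
  \sum_(p <- rho u) \sum_(q <- rho p.1) G p q =
  \sum_(p <- rho u) \sum_(q <- Delta p.2) G (0, q.2) (p.1, q.1).
Proof.
move=> HG HF.
have := teq3_sumF (F := fun x => G (0, x.2) (x.1.1, x.1.2)) (rca_coassoc HR u) HF.
rewrite !big_allpairs_dep /= => <-.
by apply: eq_bigr => p _; apply: eq_bigr => -[q1 q2] _; rewrite HG.
Qed.

Lemma R_M (X : lmodType k) x y (F : M * H -> X) :
  multilin2 (fun a b => F (a, b)) ->
  \sum_(p <- rho (mul x y)) F p =
  \sum_(p <- rho x) \sum_(q <- rho y) F (mul p.1 q.1, p.2 * q.2).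
Proof.
by move=> HF; rewrite (teq2_sumF (rca_mul HR x y) HF) big_allpairs_dep.
Qed.

Lemma R_1 (X : lmodType k) (F : M * H -> X) :
  multilin2 (fun a b => F (a, b)) -> \sum_(p <- rho one) F p = F (one, 1).
Proof. by move=> HF; rewrite (teq2_sumF (rca_one HR) HF) big_seq1. Qed.

Lemma R_counit (X : lmodType k) u (G : M -> X) :
  lin1 G -> \sum_(p <- rho u) eps p.2 *: G p.1 = G u.
Proof.
move=> HG; rewrite -[in RHS](rca_counit HR u) (lin_sum _ _ HG).
by apply: eq_bigr => p _; rewrite (linZ _ _ HG).
Qed.
End RCo.

Section BiCo.
Variables (M : lmodType k) (mul : M -> M -> M) (one : M) (lam : M -> seq (H * M))
  (rho : M -> seq (M * H)).
Hypothesis HBC : is_bicomodule_algebra Delta eps mul one lam rho.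

Lemma LR_co (X : lmodType k) u (G : M * H -> H * M -> X) :
  (forall p q, G p q = G (0, p.2) q) ->
  multilin3 (fun a b c => G (0, c) (a, b)) ->
  \sum_(p <- rho u) \sum_(q <- lam p.1) G p q =
  \sum_(p <- lam u) \sum_(q <- rho p.2) G (0, q.2) (p.1, q.1).
Proof.
move=> HG HF.
have := teq3_sumF (F := fun x => G (0, x.2) (x.1.1, x.1.2)) (bca_compat HBC u) HF.
rewrite !big_allpairs_dep /= => <-.
by apply: eq_bigr => p _; apply: eq_bigr => -[q1 q2] _; rewrite HG.
Qed.

Lemma LR_co' (X : lmodType k) u (G : H * M -> M * H -> X) :
  (forall p q, G p q = G (p.1, 0) q) ->
  multilin3 (fun a b c => G (a, 0) (b, c)) ->
  \sum_(p <- lam u) \sum_(q <- rho p.2) G p q =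
  \sum_(p <- rho u) \sum_(q <- lam p.1) G (q.1, 0) (q.2, p.2).
Proof.
move=> HG HF.
have := teq3_sumF (F := fun x => G (x.1.1, 0) (x.1.2, x.2)) (bca_compat HBC u) HF.
rewrite !big_allpairs_dep /= => ->.
by apply: eq_bigr => p _; apply: eq_bigr => -[q1 q2] _; rewrite HG.
Qed.
End BiCo.

Section LMod.
Variables (M : lmodType k) (mul : M -> M -> M) (one : M) (act : H -> M -> M).
Hypothesis HM : H_left_module_algebra Delta eps mul one act.

Lemma sumD_eq (F : H -> H -> M) h :
  sumD +%R 0 Delta h F = \sum_(p <- Delta h) F p.1 p.2.
Proof.
rewrite /sumD; elim: (Delta h) => [|p s IH]; first by rewrite big_nil.
by rewrite big_cons /= IH.
Qed.

Lemma A_linH c : lin1 (fun h => act h c).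
Proof. by move=> a g h; exact: (lma_linH HM a g h c). Qed.
Lemma A_linT h : lin1 (fun c => act h c).
Proof. by move=> a x y; exact: (lma_linT HM h a x y). Qed.
Lemma A_1 x : act 1 x = x. Proof. exact: (lma_act1 HM x). Qed.
Lemma A_M g h x : act (g * h) x = act g (act h x). Proof. exact: (lma_actM HM g h x). Qed.
Lemma A_mul h x y : act h (mul x y) = \sum_(p <- Delta h) mul (act p.1 x) (act p.2 y).
Proof. by rewrite (lma_act_mul HM h x y) sumD_eq. Qed.
Lemma A_one h : act h one = eps h *: one. Proof. exact: (lma_act_one HM h). Qed.
Lemma A_alg : algebra_on mul one. Proof. exact: lma_alg HM. Qed.
End LMod.

Section RMod.
Variables (M : lmodType k) (mul : M -> M -> M) (one : M) (ract : M -> H -> M).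
Hypothesis HM : is_right_module_algebra (@eq M) +%R 0 ( *:%R) mul one Delta eps ract.

Lemma RA_linH c : lin1 (fun h => ract c h).
Proof. by move=> a g h; exact: (rma_linH HM a g h c). Qed.
Lemma RA_linT h : lin1 (fun c => ract c h).
Proof. by move=> a x y; exact: (rma_linT HM h a x y). Qed.
Lemma RA_1 x : ract x 1 = x. Proof. exact: (rma_act1 HM x). Qed.
Lemma RA_M g h x : ract x (g * h) = ract (ract x g) h. Proof. exact: (rma_actM HM g h x). Qed.
Lemma RA_mul h x y : ract (mul x y) h = \sum_(p <- Delta h) mul (ract x p.1) (ract y p.2).
Proof. by rewrite (rma_act_mul HM h x y) sumD_eq. Qed.
Lemma RA_one h : ract one h = eps h *: one. Proof. exact: (rma_act_one HM h). Qed.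
End RMod.

Section YD.
Variables (M : lmodType k) (mul : M -> M -> M) (one : M) (act : H -> M -> M)
  (lam : M -> seq (H * M)).
Hypothesis HY : is_YD_algebra Delta eps mul one act lam.

Lemma YD_sum (X : lmodType k) h a (F : H * M -> X) :
  multilin2 (fun x y => F (x, y)) ->
  \sum_(p <- Delta h) \sum_(q <- lam a) F (p.1 * q.1, act p.2 q.2) =
  \sum_(p <- Delta h) \sum_(q <- lam (act p.1 a)) F (q.1 * p.2, q.2).
Proof.
move=> HF; have := teq2_sumF (yd_compat HY h a) HF.
by rewrite !big_allpairs_dep.
Qed.
End YD.

End Bi.

Section AlgOn.
Variables (k : fieldType) (M : lmodType k) (mul : M -> M -> M) (one : M).
Hypothesis HA : algebra_on mul one.
Lemma M_linl c : lin1 (fun x => mul x c).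
Proof. by move=> a x y; exact: (alg_mul_linl HA a x y c). Qed.
Lemma M_linr c : lin1 (fun x => mul c x).
Proof. by move=> a x y; exact: (alg_mul_linr HA a c x y). Qed.
Lemma M_A x y z : mul (mul x y) z = mul x (mul y z). Proof. exact: (alg_mulA HA x y z). Qed.
Lemma M_1l x : mul one x = x. Proof. exact: (alg_mul1l HA x). Qed.
Lemma M_1r x : mul x one = x. Proof. exact: (alg_mul1r HA x). Qed.
End AlgOn.

Ltac lin_extra ::= match goal with HB : is_bialgebra _ _ |- _ =>
  apply: (lin_epsZ HB); solve_lin end.


Section SmashAlg.
Variables (k : fieldType) (H : algType k) (Delta : H -> seq (H * H)) (eps : H -> k).
Hypothesis HB : is_bialgebra Delta eps.
Variables (M : lmodType k) (mulM : M -> M -> M) (oneM : M) (actM : H -> M -> M).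
Hypothesis HM : H_left_module_algebra Delta eps mulM oneM actM.
Variables (N : lmodType k) (mulN : N -> N -> N) (oneN : N) (lamN : N -> seq (H * N)).
Hypothesis HN : is_left_comodule_algebra Delta eps mulN oneN lamN.

Let Lm1 := M_linl (A_alg HM).
Let Lm2 := M_linr (A_alg HM).
Let Ln1 := M_linl (L_alg HN).
Let Ln2 := M_linr (L_alg HN).
Let La1 := A_linH HM.
Let La2 := A_linT HM.
Let LD := D_llin HB.
Let LL := L_llin HN.

Notation sm := (smash_mul mulM mulN actM lamN).

Lemma pair_sm (X : lmodType k) (F : M * N -> X) s t :
  \sum_(x <- sm s t) F x = \sum_(p <- s) \sum_(q <- t) \sum_(r <- lamN p.2)
     F (mulM p.1 (actM r.1 q.1), mulN r.2 q.2).
Proof.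
rewrite /smash_mul big_allpairs_dep; apply: eq_bigr => p _.
by rewrite big_allpairs_dep.
Qed.

Lemma smash_is_alg : is_algebra (@teq2 k M N) cat (@tscale2 k M N) sm (smash_one oneM oneN).
Proof.
split.
- move=> x x' y y' Hx Hy X f Hf; case: Hf => Hf1 Hf2.
  rewrite !pair_sm; srw (teq2_sumF Hx).
  by under eq_bigr => p _ do srw (teq2_sumF Hy).
- move=> a x x' y X f Hf; case: Hf => Hf1 Hf2.
  by srw sum_tscale; rewrite !pair_sm; srw sum_tscale.
- move=> a x y y' X f Hf; case: Hf => Hf1 Hf2.
  srw sum_tscale; rewrite !pair_sm.
  under eq_bigr => p _ do srw sum_tscale.
  by rewrite big_split /= -scaler_sumr.
- move=> x y z X f Hf; case: Hf => Hf1 Hf2.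
  rewrite !pair_sm.
  under [RHS]eq_bigr => p _ do rewrite pair_sm.
  cs.
  deepL ltac:(srw (L_M HN)). cs.
  deepL ltac:(rewrite (A_M HM) (M_A (A_alg HM)) (M_A (L_alg HN))).
  deepR ltac:(rewrite (A_mul HM) (lin_sum _ _ (Lm2 _)) (lin_sum _ _ (Hf1 _))).
  atR 4%N ltac:(srw (L_coA HN)). cs.
  atL 2%N ltac:(rewrite xchg).
  atL 4%N ltac:(rewrite xchg).
  atL 3%N ltac:(rewrite xchg).
  reflexivity.
- move=> y X f Hf; case: Hf => Hf1 Hf2.
  rewrite pair_sm big_seq1 /=.
  apply: eq_bigr => q _.
  by srw (L_1 HN); rewrite /= (A_1 HM) (M_1l (A_alg HM)) (M_1l (L_alg HN)).
- move=> y X f Hf; case: Hf => Hf1 Hf2.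
  rewrite pair_sm; apply: eq_bigr => p _.
  rewrite big_seq1 /=.
  under eq_bigr => r _ do rewrite (A_one HM) (M_1r (L_alg HN)) (linZ _ _ (Lm2 _)) (linZ _ _ (Hf1 _)).
  rewrite (M_1r (A_alg HM)). 
  by rewrite (@L_counit _ _ _ _ _ _ _ _ HN _ p.2 (fun n => f p.1 n)).
Qed.
End SmashAlg.


Section Pairs.
Variables (k : fieldType) (H : algType k) (Delta : H -> seq (H * H)).
Lemma pair_lact (M N X : lmodType k) (actM : H -> M -> M) (actN : H -> N -> N)
  (F : M * N -> X) h s :
  \sum_(z <- smash_lact Delta actM actN h s) F z =
  \sum_(q <- s) \sum_(p <- Delta h) F (actM p.1 q.1, actN p.2 q.2).
Proof. by rewrite /smash_lact big_allpairs_dep. Qed.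

Lemma pair_ract (M N X : lmodType k) (ract : M -> H -> M) (F : M * N -> X) h s :
  \sum_(z <- smash_ract ract s h) F z = \sum_(q <- s) F (ract q.1 h, q.2).
Proof. by rewrite /smash_ract big_map. Qed.

Lemma pair_sumD (M N X : lmodType k) (G : H -> H -> seq (M * N)) (F : M * N -> X) h :
  \sum_(z <- sumD cat [::] Delta h G) F z = \sum_(p <- Delta h) \sum_(z <- G p.1 p.2) F z.
Proof.
rewrite /sumD; elim: (Delta h) => [|p s IH]; first by rewrite !big_nil.
by rewrite big_cons /= big_cat IH.
Qed.
End Pairs.

Section P1.
Variables (k : fieldType) (H : algType k) (Delta : H -> seq (H * H)) (eps : H -> k).
Hypothesis HB : is_bialgebra Delta eps.
Variables (cA : lmodType k) (mulc : cA -> cA -> cA) (onec : cA)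
    (lactc : H -> cA -> cA) (ractc : cA -> H -> cA).
Hypothesis HC : H_bimodule_algebra Delta eps mulc onec lactc ractc.
Variables (A : lmodType k) (mulA : A -> A -> A) (oneA : A)
    (actA : H -> A -> A) (lamA : A -> seq (H * A)).
Hypothesis HY : is_YD_algebra Delta eps mulA oneA actA lamA.

Let HCL : H_left_module_algebra Delta eps mulc onec lactc := bma_left HC.
Let HCR := bma_right HC.
Let HAM := yd_module HY.
Let HAL := yd_comodule HY.

Let Lm1 := M_linl (A_alg HCL).
Let Lm2 := M_linr (A_alg HCL).
Let Ln1 := M_linl (L_alg HAL).
Let Ln2 := M_linr (L_alg HAL).
Let La1 := A_linH HCL.
Let La2 := A_linT HCL.
Let Lb1 := A_linH HAM.
Let Lb2 := A_linT HAM.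
Let Lr1 := RA_linH HCR.
Let Lr2 := RA_linT HCR.
Let LD := D_llin HB.
Let LL := L_llin HAL.

Notation sm := (smash_mul mulc mulA lactc lamA).
Notation lact := (smash_lact Delta lactc actA).
Notation ract := (smash_ract ractc).

Lemma P1_left : is_left_module_algebra (@teq2 k cA A) cat [::] (@tscale2 k cA A)
    sm (smash_one onec oneA) Delta eps lact.
Proof.
split.
- exact: (@smash_is_alg k H Delta eps cA mulc onec lactc HCL A mulA oneA lamA HAL).
- move=> h x y Hxy X f Hf; case: Hf => Hf1 Hf2.
  by rewrite !pair_lact; srw (teq2_sumF Hxy).
- move=> a g h x X f Hf; case: Hf => Hf1 Hf2.
  srw sum_tscale; rewrite !pair_lact.
  have L : lin1 (fun h => \sum_(q <- x) \sum_(p <- Delta h)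
            f (lactc p.1 q.1, actA p.2 q.2).1 (lactc p.1 q.1, actA p.2 q.2).2).
    solve_lin.
  by have := L a g h; cbv beta => ->.
- move=> h a x y X f Hf; case: Hf => Hf1 Hf2.
  by srw sum_tscale; rewrite !pair_lact; srw sum_tscale.
- move=> x X f Hf; case: Hf => Hf1 Hf2.
  rewrite pair_lact; apply: eq_bigr => q _.
  by srw (D_1 HB); rewrite /= (A_1 HCL) (A_1 HAM).
- move=> g h x X f Hf; case: Hf => Hf1 Hf2.
  rewrite !pair_lact; cs.
  deepL ltac:(srw (D_M HB)); cs.
  deepL ltac:(rewrite (A_M HCL) (A_M HAM)).
  by atL 1%N ltac:(rewrite xchg).
- move=> h x y X f Hf; case: Hf => Hf1 Hf2.
  rewrite pair_lact pair_sm pair_sumD; cs.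
  deepL ltac:(rewrite (A_mul HCL) (A_mul HAM) (lin_sum _ _ (Hf1 _))).
  deepL ltac:(rewrite (lin_sum _ _ (Hf2 _))).
  deepL ltac:(rewrite -(A_M HCL)).
  atL 3%N ltac:(srw (D_4 HB)); cs.
  atL 2%N ltac:(rewrite xchg). atL 3%N ltac:(rewrite xchg). atL 4%N ltac:(rewrite xchg).
  under [LHS]eq_bigr => p _. under eq_bigr => q _. under eq_bigr => d _. under eq_bigr => q' _.
    rewrite (@YD_sum _ _ _ _ _ _ _ _ _ HY _ q'.2 p.2
      (fun z => f (mulc (lactc q'.1 p.1) (lactc z.1 q.1)) (mulA z.2 (actA d.2 q.2)))); last by solve_ml.
    over. over. over. over.
  cs.
  deepR ltac:(rewrite pair_sm). 
  deepR ltac:(rewrite pair_lact). 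
  deepR ltac:(rewrite pair_lact). cs.
  deepR ltac:(rewrite -(A_M HCL)).
  rewrite [RHS]xchg. atR 2%N ltac:(rewrite xchg). atR 1%N ltac:(rewrite xchg).
  atR 2%N ltac:(srw (D_4 HB)); cs.
  reflexivity.
- move=> h X f Hf; case: Hf => Hf1 Hf2.
  rewrite pair_lact big_seq1 big_map /= big_seq1; cs.
  under eq_bigr => p _ do rewrite (A_one HCL) (A_one HAM) (linZ _ _ (Hf1 _)) (linZ _ _ (Hf2 _)).
  rewrite (@D_counitl _ _ _ _ HB _ h (fun h0 => eps h0 *: f onec oneA)); last by solve_lin.
  by rewrite (linZ _ _ (Hf1 _)).
Qed.

Lemma P1_right : is_right_module_algebra (@teq2 k cA A) cat [::] (@tscale2 k cA A)
    sm (smash_one onec oneA) Delta eps ract.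
Proof.
split.
- exact: (@smash_is_alg k H Delta eps cA mulc onec lactc HCL A mulA oneA lamA HAL).
- move=> h x y Hxy X f Hf; case: Hf => Hf1 Hf2.
  by rewrite !pair_ract; srw (teq2_sumF Hxy).
- move=> a g h x X f Hf; case: Hf => Hf1 Hf2.
  srw sum_tscale; rewrite !pair_ract.
  have L : lin1 (fun h => \sum_(q <- x)
            f (ractc q.1 h, q.2).1 (ractc q.1 h, q.2).2).
    solve_lin.
  by have := L a g h; cbv beta => ->.
- move=> h a x y X f Hf; case: Hf => Hf1 Hf2.
  by srw sum_tscale; rewrite !pair_ract; srw sum_tscale.
- move=> x X f Hf; case: Hf => Hf1 Hf2.
  rewrite pair_ract; apply: eq_bigr => q _.
  by rewrite /= (RA_1 HCR).
- move=> g h x X f Hf; case: Hf => Hf1 Hf2.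
  rewrite !pair_ract; cs.
  by apply: eq_bigr => q _; rewrite (RA_M HCR).
- move=> h x y X f Hf; case: Hf => Hf1 Hf2.
  rewrite pair_ract pair_sm pair_sumD; cs.
  deepL ltac:(rewrite (RA_mul HCR) (lin_sum _ _ (Hf1 _))).
  deepL ltac:(rewrite -(bma_comm HC)).
  atL 2%N ltac:(rewrite xchg). atL 1%N ltac:(rewrite xchg). rewrite [LHS]xchg.
  deepR ltac:(rewrite pair_sm).
  deepR ltac:(rewrite pair_ract).
  deepR ltac:(rewrite pair_ract). cs.
  reflexivity.
- move=> h X f Hf; case: Hf => Hf1 Hf2.
  by rewrite pair_ract /smash_one !big_seq1 /= (RA_one HCR).
Qed.

Lemma P1_comm : forall h g x, teq2 (lact h (ract x g)) (ract (lact h x) g).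
Proof.
move=> h g x X f Hf; case: Hf => Hf1 Hf2.
rewrite pair_lact pair_ract pair_ract pair_lact; cs.
by apply: eq_bigr => q _; apply: eq_bigr => d _; rewrite (bma_comm HC).
Qed.

Lemma P1 : is_bimodule_algebra (@teq2 k cA A) cat [::] (@tscale2 k cA A)
    sm (smash_one onec oneA) Delta eps lact ract.
Proof. split; [exact: P1_left | exact: P1_right | exact: P1_comm]. Qed.
End P1.


Section Pairs2.
Variables (k : fieldType) (H : algType k).
Lemma pair_lam (M N X : lmodType k) (lamM : M -> seq (H * M)) (lamN : N -> seq (H * N))
  (F : H * M * N -> X) s :
  \sum_(z <- smash_lam lamM lamN s) F z =
  \sum_(q <- s) \sum_(p <- lamM q.1) \sum_(r <- lamN q.2) F (p.1 * r.1, p.2, r.2).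
Proof.
rewrite /smash_lam big_allpairs_dep; apply: eq_bigr => q _.
by rewrite big_allpairs_dep.
Qed.

Lemma pair_rho (M N X : lmodType k) (rhoN : N -> seq (N * H)) (F : M * N * H -> X) s :
  \sum_(z <- smash_rho rhoN s) F z = \sum_(q <- s) \sum_(p <- rhoN q.2) F (q.1, p.1, p.2).
Proof. by rewrite /smash_rho big_allpairs_dep. Qed.
End Pairs2.

Section P2.
Variables (k : fieldType) (H : algType k) (Delta : H -> seq (H * H)) (eps : H -> k).
Hypothesis HB : is_bialgebra Delta eps.
Variables (bA : lmodType k) (mulb : bA -> bA -> bA) (oneb : bA)
    (lamb : bA -> seq (H * bA)) (rhob : bA -> seq (bA * H)).
Hypothesis HbA : is_bicomodule_algebra Delta eps mulb oneb lamb rhob.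
Variables (A : lmodType k) (mulA : A -> A -> A) (oneA : A)
    (actA : H -> A -> A) (lamA : A -> seq (H * A)).
Hypothesis HY : is_YD_algebra Delta eps mulA oneA actA lamA.

Let HAM := yd_module HY.
Let HAL := yd_comodule HY.
Let HbL := bca_left HbA.
Let HbR := bca_right HbA.

Let Lm1 := M_linl (A_alg HAM).
Let Lm2 := M_linr (A_alg HAM).
Let Ln1 := M_linl (L_alg HbL).
Let Ln2 := M_linr (L_alg HbL).
Let Lb1 := A_linH HAM.
Let Lb2 := A_linT HAM.
Let LD := D_llin HB.
Let LL := L_llin HAL.
Let LLb := L_llin HbL.
Let LRb := R_llin HbR.

Notation sm := (smash_mul mulA mulb actA lamb).
Notation lam := (smash_lam lamA lamb).
Notation rho := (smash_rho rhob).

Lemma P2 : is_rep_bicomodule_algebra Delta eps sm (smash_one oneA oneb) lam rho.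
Proof.
split.
- exact: (@smash_is_alg k H Delta eps A mulA oneA actA HAM bA mulb oneb lamb HbL).
- move=> s t Hst X f [Hf1 Hf2 Hf3].
  by rewrite !pair_lam; srw (teq2_sumF Hst).
- move=> s t Hst X f [Hf1 Hf2 Hf3].
  by rewrite !pair_rho; srw (teq2_sumF Hst).
- move=> a s t X f [Hf1 Hf2 Hf3].
  rewrite pair_lam; srw sum_tscale; rewrite big_cat big_map !pair_lam; cs.
  congr (_ + _); rewrite scaler_sumr; apply: eq_bigr => q _.
  rewrite scaler_sumr; apply: eq_bigr => p _.
  rewrite scaler_sumr; apply: eq_bigr => r _.
  by rewrite (linZ _ _ (Hf1 _ _)).
- move=> a s t X f [Hf1 Hf2 Hf3].
  by srw sum_tscale3; rewrite !pair_rho; srw sum_tscale.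
- move=> s X f [Hf1 Hf2 Hf3 Hf4].
  rewrite [LHS]sum_ap [RHS]sum_ap !pair_lam; cs.
  deepR ltac:(rewrite pair_lam big_seq1). cs.
  deepL ltac:(srw (D_M HB)). cs.
  atL 2%N ltac:(rewrite xchg).
  atL 1%N ltac:(srw (L_coA HAL)). cs.
  atL 3%N ltac:(srw (L_coA HbL)). cs.
  atL 2%N ltac:(rewrite xchg).
  reflexivity.
- move=> s X f [Hf1 Hf2].
  rewrite big_map pair_lam; cs; apply: eq_bigr => w _.
  under eq_bigr => a _ do under eq_bigr => b _ do
    rewrite (epsM HB) -scalerA !(linZ _ _ (Hf1 _)).
  under eq_bigr => a _.
    rewrite -scaler_sumr (@L_counit _ _ _ _ _ _ _ _ HbL _ w.2 (fun n => f a.2 n));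
      last by solve_lin.
    over.
  rewrite (@L_counit _ _ _ _ _ _ _ _ HAL _ w.1 (fun m => f m w.2)); last by solve_lin.
  by [].
- move=> s X f [Hf1 Hf2 Hf3 Hf4].
  rewrite [LHS]sum_ap [RHS]sum_ap !pair_rho; cs.
  deepL ltac:(rewrite pair_rho big_seq1). cs.
  atR 1%N ltac:(srw (R_coA HbR)). cs.
  reflexivity.
- move=> s X f [Hf1 Hf2].
  rewrite big_map pair_rho; cs; apply: eq_bigr => w _.
  under eq_bigr => c _ do rewrite (linZ _ _ (Hf1 _)).
  rewrite (@R_counit _ _ _ _ _ _ _ _ HbR _ w.2 (fun n => f w.1 n)); last by solve_lin.
  by [].
- move=> s t X f [Hf1 Hf2 Hf3].
  rewrite pair_lam pair_sm; cs.
  deepL ltac:(srw (L_M HAL)). cs.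
  deepL ltac:(srw (L_M HbL)). cs.
  atL 4%N ltac:(rewrite xchg). atL 3%N ltac:(rewrite xchg).
  atL 2%N ltac:(srw (L_coA' HbL)). cs.
  atL 3%N ltac:(rewrite xchg).
  under [LHS]eq_bigr => p _. under eq_bigr => q _. under eq_bigr => r _.
    under eq_bigr => a _.
      deep ltac:(rewrite mulrA -(mulrA a.1)).
      rewrite -(@YD_sum _ _ _ _ _ _ _ _ _ HY _ r.1 q.1
        (fun z => \sum_(b' <- lamb q.2)
           f (a.1 * z.1 * b'.1) (mulA a.2 z.2) (mulb r.2 b'.2))); last by solve_ml.
      over.
    over. over. over.
  cs.
  atL 3%N ltac:(rewrite xchg).
  atL 2%N ltac:(srw (L_coA HbL)). cs.
  rewrite [RHS]sum_ap pair_lam; cs.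
  deepR ltac:(rewrite sum_ap).
  deepR ltac:(rewrite pair_lam).
  deepR ltac:(rewrite pair_sm !big_seq1). cs.
  deepL ltac:(rewrite !mulrA). deepR ltac:(rewrite !mulrA).
  atL 3%N ltac:(rewrite xchg). atL 2%N ltac:(rewrite xchg). atL 1%N ltac:(rewrite xchg).
  atL 2%N ltac:(rewrite xchg).
  atL 4%N ltac:(rewrite xchg). atL 5%N ltac:(rewrite xchg).
  reflexivity.
- move=> X f [Hf1 Hf2 Hf3].
  rewrite pair_lam /smash_one big_seq1 big_map big_seq1 /=.
  srw (L_1 HAL); cs; srw (L_1 HbL); cs.
  by rewrite mulr1.
- move=> s t X f [Hf1 Hf2 Hf3].
  rewrite pair_rho pair_sm [RHS]sum_ap pair_rho; cs.
  deepR ltac:(rewrite sum_ap).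
  deepR ltac:(rewrite pair_rho).
  deepR ltac:(rewrite pair_sm !big_seq1). cs.
  deepL ltac:(srw (R_M HbR)). cs.
  atL 2%N ltac:(srw (LR_co' HbA)). cs.
  atL 1%N ltac:(rewrite xchg). atL 3%N ltac:(rewrite xchg).
  reflexivity.
- move=> X f [Hf1 Hf2 Hf3].
  rewrite pair_rho /smash_one big_seq1 big_map big_seq1 /=.
  by srw (R_1 HbR).
- move=> s X f [Hf1 Hf2 Hf3 Hf4].
  rewrite [LHS]sum_ap [RHS]sum_ap pair_rho pair_lam; cs.
  deepL ltac:(rewrite pair_lam big_seq1).
  deepR ltac:(rewrite pair_rho big_seq1). cs.
  atL 1%N ltac:(rewrite xchg).
  atL 2%N ltac:(srw (LR_co HbA)). cs.
  reflexivity.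
Qed.
End P2.


Section Pairs3.
Variables (k : fieldType) (H : algType k).
Lemma pair_lrl (V1 V2 W X : lmodType k)
    (mulB : seq (V1 * V2) -> seq (V1 * V2) -> seq (V1 * V2))
    (lactB : H -> seq (V1 * V2) -> seq (V1 * V2))
    (ractB : seq (V1 * V2) -> H -> seq (V1 * V2))
    (mulW : W -> W -> W) (lamW : W -> seq (H * W)) (rhoW : W -> seq (W * H))
    (s t : seq (V1 * V2 * W)) (F : V1 * V2 * W -> X) :
  \sum_(z <- lr_mul_left mulB lactB ractB mulW lamW rhoW s t) F z =
  \sum_(x <- s) \sum_(y <- t) \sum_(p <- rhoW y.2) \sum_(q <- lamW x.2)
    \sum_(b <- mulB (ractB [:: x.1] p.2) (lactB q.1 [:: y.1])) F (b.1, b.2, mulW q.2 p.1).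
Proof.
rewrite /lr_mul_left sum_ap; apply: eq_bigr => x _; rewrite sum_ap.
apply: eq_bigr => y _; rewrite sum_ap; apply: eq_bigr => p _.
by rewrite sum_ap.
Qed.

Lemma pair_lrr (V1 V2 W X : lmodType k)
    (mulV : V1 -> V1 -> V1) (lactV : H -> V1 -> V1) (ractV : V1 -> H -> V1)
    (mulB : seq (V2 * W) -> seq (V2 * W) -> seq (V2 * W))
    (lamB : seq (V2 * W) -> seq (H * V2 * W))
    (rhoB : seq (V2 * W) -> seq (V2 * W * H))
    (s t : seq (V1 * V2 * W)) (F : V1 * V2 * W -> X) :
  \sum_(z <- lr_mul_right mulV lactV ractV mulB lamB rhoB s t) F z =
  \sum_(x <- s) \sum_(y <- t) \sum_(p <- rhoB [:: (y.1.2, y.2)])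
    \sum_(q <- lamB [:: (x.1.2, x.2)])
    \sum_(b <- mulB [:: (q.1.2, q.2)] [:: (p.1.1, p.1.2)])
      F (mulV (ractV x.1.1 p.2) (lactV q.1.1 y.1.1), b.1, b.2).
Proof.
rewrite /lr_mul_right sum_ap; apply: eq_bigr => x _; rewrite sum_ap.
apply: eq_bigr => y _; rewrite sum_ap; apply: eq_bigr => p _.
by rewrite sum_ap.
Qed.
End Pairs3.

Section P3.
Variables (k : fieldType) (H : algType k) (Delta : H -> seq (H * H)) (eps : H -> k).
Hypothesis HB : is_bialgebra Delta eps.
Variables (cA : lmodType k) (mulc : cA -> cA -> cA) (onec : cA)
    (lactc : H -> cA -> cA) (ractc : cA -> H -> cA).
Hypothesis HC : H_bimodule_algebra Delta eps mulc onec lactc ractc.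
Variables (bA : lmodType k) (mulb : bA -> bA -> bA) (oneb : bA)
    (lamb : bA -> seq (H * bA)) (rhob : bA -> seq (bA * H)).
Hypothesis HbA : is_bicomodule_algebra Delta eps mulb oneb lamb rhob.
Variables (A : lmodType k) (mulA : A -> A -> A) (oneA : A)
    (actA : H -> A -> A) (lamA : A -> seq (H * A)).
Hypothesis HY : is_YD_algebra Delta eps mulA oneA actA lamA.

Let HCL : H_left_module_algebra Delta eps mulc onec lactc := bma_left HC.
Let HCR := bma_right HC.
Let HAM := yd_module HY.
Let HAL := yd_comodule HY.
Let HbL := bca_left HbA.
Let HbR := bca_right HbA.

Let Lm1 := M_linl (A_alg HCL).
Let Lm2 := M_linr (A_alg HCL).
Let Ln1 := M_linl (L_alg HAL).
Let Ln2 := M_linr (L_alg HAL).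
Let Lo1 := M_linl (L_alg HbL).
Let Lo2 := M_linr (L_alg HbL).
Let La1 := A_linH HCL.
Let La2 := A_linT HCL.
Let Lb1 := A_linH HAM.
Let Lb2 := A_linT HAM.
Let Lr1 := RA_linH HCR.
Let Lr2 := RA_linT HCR.
Let LD := D_llin HB.
Let LL := L_llin HAL.
Let LLb := L_llin HbL.
Let LRb := R_llin HbR.

Lemma P3 : forall s t : seq (cA * A * bA),
  teq3
    (lr_mul_left (smash_mul mulc mulA lactc lamA)
       (smash_lact Delta lactc actA) (smash_ract ractc) mulb lamb rhob s t)
    (lr_mul_right mulc lactc ractc (smash_mul mulA mulb actA lamb)
       (smash_lam lamA lamb) (smash_rho rhob) s t).
Proof.
move=> s t X f [Hf1 Hf2 Hf3].
rewrite pair_lrl pair_lrr; cs.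
deepL ltac:(rewrite pair_sm pair_ract big_seq1); cs.
deepL ltac:(rewrite pair_lact big_seq1); cs.
deepR ltac:(rewrite pair_rho big_seq1); cs.
deepR ltac:(rewrite pair_lam big_seq1); cs.
deepR ltac:(rewrite pair_sm !big_seq1); cs.
atL 4%N ltac:(rewrite xchg). atL 3%N ltac:(rewrite xchg).
atL 4%N ltac:(srw (L_coA HbL)); cs.
deepR ltac:(rewrite (A_M HCL)).
reflexivity.
Qed.
End P3.


Theorem proposition3p4 (k : fieldType) (H : algType k)
    (Delta : H -> seq (H * H)) (eps : H -> k)
    (cA : lmodType k) (mulc : cA -> cA -> cA) (onec : cA)
    (lactc : H -> cA -> cA) (ractc : cA -> H -> cA)
    (bA : lmodType k) (mulb : bA -> bA -> bA) (oneb : bA)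
    (lamb : bA -> seq (H * bA)) (rhob : bA -> seq (bA * H))
    (A : lmodType k) (mulA : A -> A -> A) (oneA : A)
    (actA : H -> A -> A) (lamA : A -> seq (H * A)) :
  is_bialgebra Delta eps ->
  H_bimodule_algebra Delta eps mulc onec lactc ractc ->
  is_bicomodule_algebra Delta eps mulb oneb lamb rhob ->
  is_YD_algebra Delta eps mulA oneA actA lamA ->
  (* (1) cA >< A is an H-bimodule algebra *)
  is_bimodule_algebra (@teq2 k cA A) cat [::] (@tscale2 k cA A)
    (smash_mul mulc mulA lactc lamA) (smash_one onec oneA) Delta eps
    (smash_lact Delta lactc actA) (smash_ract ractc)
  (* (2) A >< bA is an H-bicomodule algebra *)
  /\ is_rep_bicomodule_algebra Delta eps
       (smash_mul mulA mulb actA lamb) (smash_one oneA oneb)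
       (smash_lam lamA lamb) (smash_rho rhob)
  (* (3) (cA >< A) # bA = cA # (A >< bA) via the identity of cA (x) A (x) bA *)
  /\ (forall s t : seq (cA * A * bA),
        teq3
          (lr_mul_left (smash_mul mulc mulA lactc lamA)
             (smash_lact Delta lactc actA) (smash_ract ractc) mulb lamb rhob s t)
          (lr_mul_right mulc lactc ractc (smash_mul mulA mulb actA lamb)
             (smash_lam lamA lamb) (smash_rho rhob) s t)).
Proof.
move=> HB HC HbA HY.
split; first exact: (P1 HB HC HY).
split; first exact: (P2 HB HbA HY).
exact: (P3 HC HbA HY).
Qed.
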